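(* Let $H_1,\dots,H_n$ be two-terminal signed graphs, $H_i=H_i(x_{i-1},x_i)$, and let $G=\mathcal S(H_1,\dots,H_n)$ where $n=|\mathcal B(G)|$ (i.e. $H_1,\dots,H_n$ are exactly the parts of $G$) and $|\mathcal B_2(G)|\ge 1$. Let $\theta^*=(1,1,-1,-1)$ if $|\mathcal B_2(G)|=1$, and let $\theta^*\in\{(1,1,-1,-1),(-1,-1,-1,-1)\}$ be arbitrary if $|\mathcal B_2(G)|\ge 2$. Suppose every $H_i\in\mathcal B_2(G)$ has a $\Psi_{x_{i-1}x_i}(2)$-cover. Then $G$ has a signed subgraph $6$-cover of the form $$\mathcal F_0\cup 2\mathcal B_0(G)\cup\{P_1,P_2,P_3,P_4\}\cup\{T_1,T_2,T_3,T_4\},$$ where $\mathcal F_0$ is a family of signed circuits; $2\mathcal B_0(G)$ denotes the family containing each member of $\mathcal B_0(G)$ twice; $P_1,\dots,P_4$ are $x_0x_n$-paths of $G$ with $(\sigma(P_1),\sigma(P_2),\sigma(P_3),\sigma(P_4))=\theta^*$; $T_1,T_2$ are tadpoles of $G$ at $x_0$ whose unbalanced circuit lies in the part of $\mathcal B_0(G)\cup\mathcal B_2(G)$ with minimum subscript; and $T_3,T_4$ are tadpoles of $G$ at $x_n$ whose unbalanced circuit lies in the part of $\mathcal B_0(G)\cup\mathcal B_2(G)$ with maximum subscript.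
   Context: Signed graph: a finite graph (multiple edges and loops allowed) with signature $\sigma:E\to\{1,-1\}$. For a subgraph or edge set $S$, $\sigma(S)=\prod_{e\in S}\sigma(e)$; a path $P$ is positive if $\sigma(P)=1$ and negative otherwise; an $xy$-path is a path with ends $x,y$. A circuit is a connected $2$-regular subgraph; it is balanced if it has an even number of negative edges, unbalanced otherwise. A barbell is the union of two unbalanced circuits $C_1,C_2$ and a path $P$ such that either $P$ is trivial and $C_1,C_2$ share exactly one vertex, or $C_1,C_2$ are vertex-disjoint and $P$ joins them meeting $C_1\cup C_2$ only at its ends. A signed circuit is a balanced circuit or a barbell. A tadpole at $x$ is the union of an $xy$-path $P$ (possibly trivial) and an unbalanced circuit $C$ with $V(P)\cap V(C)=\{y\}$. A signed subgraph $6$-cover of $G$ is a family (multiset) of subgraphs of $G$ such that every edge of $G$ lies in exactly $6$ members. For distinct vertices $x,y$ and an integer $t\in[0,3]$, a $\Psi_{xy}(t)$-cover of $G$ is a signed subgraph $6$-cover of $G$ consisting of exactly $t$ positive $xy$-paths, $t$ negative $xy$-paths, $t$ tadpoles at $x$, $6-2t$ tadpoles at $y$, and some signed circuits. A two-terminal signed graph $H(x,y)$ is a connected nonempty signed graph $H$ with a source terminal $x$ and a target terminal $y$, where $x=y$ if and only if $H$ is a single negative loop. For two-terminal signed graphs $H_i=H_i(x_i,y_i)$ ($i\in[1,n]$, pairwise disjoint), the series connection $\mathcal S(H_1,\dots,H_n)$ is the two-terminal signed graph with source $x_1$ and target $y_n$ obtained from $H_1\cup\dots\cup H_n$ by identifying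 $y_{i-1}$ with $x_i$ for each $i\in[2,n]$. If $G=\mathcal S(H_1,\dots,H_n)$ with $n$ maximum, each $H_i$ is called a part of $G$ and $\mathcal B(G)$ is the set of parts. $\mathcal B_0(G)$ is the set of parts whose two terminals coincide (these are negative loops), $\mathcal B_1(G)$ the set of parts with distinct terminals and exactly one edge, and $\mathcal B_2(G)$ the set of parts with distinct terminals and at least two edges. *)

(* Defs.v *)
(* A signed graph is given by a finite vertex type V, a finite
   edge type E (multiple edges allowed), two endpoint maps e1 e2 : E -> V
   (a loop is an edge e with e1 e = e2 e) and neg : E -> bool, where
   neg e = true means sigma(e) = -1.  Subgraphs are represented by their edge
   sets (their vertex set being the set of ends of their edges); paths also
   carry their vertex set explicitly. *)
From mathcomp Require Import all_boot.
Set Implicit Arguments.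
Unset Strict Implicit.
Unset Printing Implicit Defensive.

Section SignedGraphs.
Variables (V E : finType) (e1 e2 : E -> V) (neg : E -> bool).

Definition joins (e : E) (u v : V) : bool :=
  ((e1 e == u) && (e2 e == v)) || ((e1 e == v) && (e2 e == u)).

Definition vset (F : {set E}) : {set V} :=
  [set v | [exists e in F, (e1 e == v) || (e2 e == v)]].

(* degree of v in F (a loop counts twice) *)
Definition deg (F : {set E}) (v : V) : nat :=
  \sum_(e in F) ((e1 e == v) + (e2 e == v)).

(* sgn F = true  iff  sigma(F) = -1 *)
Definition sgn (F : {set E}) : bool := odd #|[set e in F | neg e]|.

(* W, F are the vertex and edge sets of an xy-path (possibly trivial):
   vertices x = v_0, v_1, ..., v_k = y pairwise distinct, edges f_1..f_k
   pairwise distinct, f_i joining v_{i-1} and v_i. *)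
Definition xypath (x y : V) (W : {set V}) (F : {set E}) : Prop :=
  exists (vs : seq V) (es : seq E),
    [/\ size es = size vs, uniq (x :: vs), uniq es,
        all (fun p => joins p.1 p.2.1 p.2.2) (zip es (zip (x :: vs) vs))
      & last x vs = y] /\ W = [set v in x :: vs] /\ F = [set e in es].

Definition connectedE (F : {set E}) : Prop :=
  forall u v, u \in vset F -> v \in vset F ->
    exists W P, xypath u v W P /\ P \subset F.

Definition circuit (C : {set E}) : Prop :=
  [/\ C != set0, connectedE C & forall v, v \in vset C -> deg C v = 2].

Definition unbalanced_circuit (C : {set E}) : Prop := circuit C /\ sgn C.
Definition balanced_circuit (C : {set E}) : Prop := circuit C /\ ~~ sgn C.

Definition barbell (B : {set E}) : Prop :=
  exists C1 C2, [/\ unbalanced_circuit C1, unbalanced_circuit C2 &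
    ( [/\ [disjoint C1 & C2], #|vset C1 :&: vset C2| = 1 & B = C1 :|: C2]
    \/ exists x y W P,
         [/\ [disjoint vset C1 & vset C2], x \in vset C1, y \in vset C2,
             xypath x y W P & W :&: (vset C1 :|: vset C2) = [set x; y]]
         /\ B = C1 :|: P :|: C2 )].

Definition signed_circuit (F : {set E}) : Prop :=
  balanced_circuit F \/ barbell F.

Definition tadpole (x : V) (T C : {set E}) : Prop :=
  unbalanced_circuit C /\
  exists y W P, [/\ xypath x y W P, W :&: vset C = [set y] & T = P :|: C].

Definition has_psi_cover (D : {set E}) (x y : V) (t : nat) : Prop :=
  exists Pp Pn Tx Ty Cs : seq {set E},
    [/\ size Pp = t, size Pn = t, size Tx = t & size Ty = 6 - 2 * t] /\
    [/\ (forall P, P \in Pp -> (exists W, xypath x y W P) /\ ~~ sgn P),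
        (forall P, P \in Pn -> (exists W, xypath x y W P) /\ sgn P),
        (forall T, T \in Tx -> exists C, tadpole x T C),
        (forall T, T \in Ty -> exists C, tadpole y T C) &
        (forall F, F \in Cs -> signed_circuit F)] /\
    (forall F, F \in Pp ++ Pn ++ Tx ++ Ty ++ Cs -> F \subset D) /\
        (forall e, e \in D ->
           count (fun F : {set E} => e \in F) (Pp ++ Pn ++ Tx ++ Ty ++ Cs) = 6).

Definition two_terminal (D : {set E}) (x y : V) : Prop :=
  [/\ D != set0, connectedE D, x \in vset D, y \in vset D &
      (x = y <-> exists e, [/\ D = [set e], e1 e = x, e2 e = x & neg e])].

(* G (the whole graph) is S(H_1,...,H_n), H_i having edge set parts i and
   terminals xs (i-1), xs i. *)
Definition series_decomp (n : nat) (xs : nat -> V) (parts : nat -> {set E})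
  : Prop :=
  [/\ 0 < n,
      forall i, 0 < i <= n -> two_terminal (parts i) (xs i.-1) (xs i),
      forall i j, 0 < i -> i < j -> j <= n -> [disjoint parts i & parts j],
      forall e : E, exists2 i, 0 < i <= n & e \in parts i &
      forall v : V, exists2 i, 0 < i <= n & v \in vset (parts i)] /\
      (forall i j, 0 < i -> i < j -> j <= n ->
        vset (parts i) :&: vset (parts j) =
        if all (fun k => xs k.-1 == xs k) (iota i.+1 (j - i).-1)
        then [set xs i] else set0).

End SignedGraphs.

Section Parts.
Variables (V E : finType) (xs : nat -> V) (parts : nat -> {set E}).

Definition isB0 (i : nat) : bool := xs i.-1 == xs i.
Definition isB2 (i : nat) : bool := (xs i.-1 != xs i) && (1 < #|parts i|).
Definition isB02 (i : nat) : bool := isB0 i || isB2 i.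

Definition B0list (n : nat) : seq {set E} :=
  [seq parts i | i <- [seq i <- iota 1 n | isB0 i]].

Definition first_B02 (n i : nat) : Prop :=
  [/\ 0 < i <= n, isB02 i & forall j, 0 < j < i -> ~~ isB02 j].
Definition last_B02 (n i : nat) : Prop :=
  [/\ 0 < i <= n, isB02 i & forall j, i < j <= n -> ~~ isB02 j].
End Parts.

(* Main.v *)
Require Import Defs.
From mathcomp Require Import all_boot zify.
Set Implicit Arguments.
Unset Strict Implicit.
Unset Printing Implicit Defensive.

Lemma disjE (T : finType) (A B : {set T}) :
  [disjoint A & B] <-> (forall x, x \in A -> x \in B -> False).
Proof.
split=> [H x HA HB|H]; first by rewrite (disjointFr H HA) in HB.
rewrite -setI_eq0; apply/eqP/setP => x; rewrite !inE.
by case HA: (x \in A); case HB: (x \in B) => //; case: (H x).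
Qed.

Section PathLib.
Variables (V E : finType) (e1 e2 : E -> V) (neg : E -> bool).

Local Notation xypath := (xypath e1 e2).
Local Notation joins := (joins e1 e2).
Local Notation vset := (vset e1 e2).

Lemma joinsC e u v : joins e u v = joins e v u.
Proof. by rewrite /Defs.joins orbC. Qed.

Lemma zip_belast (x : V) vs : zip (x :: vs) vs = zip (belast x vs) vs.
Proof.
by rewrite lastI -cats1 -[X in zip _ X]cats0 zip_cat ?size_belast //= cats0.
Qed.

Lemma all_zip_swap (es : seq E) (a b : seq V) :
  all (fun p => joins p.1 p.2.1 p.2.2) (zip es (zip a b)) =
  all (fun p => joins p.1 p.2.1 p.2.2) (zip es (zip b a)).
Proof.
elim: es a b => [|e es IH] [|u a] [|v b] //=.
by rewrite IH joinsC.
Qed.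

Lemma path_nil x : xypath x x [set x] set0.
Proof.
exists [::], [::]; split; first by split.
split; apply/setP => v; rewrite !inE //.
Qed.

Lemma path_xx x W P : xypath x x W P -> W = [set x] /\ P = set0.
Proof.
case=> vs [es [[Hs Hu Hue Ha Hl] [-> ->]]].
case: vs Hs Hu Hl Ha => [|v vs] Hs Hu Hl Ha.
  case: es Hs Hue Ha => // _ _ _; split; apply/setP => u; rewrite !inE //.
exfalso; move: Hu; rewrite /= -Hl /=.
by rewrite (mem_last v vs).
Qed.

Lemma path_ends x y W P : xypath x y W P -> x \in W /\ y \in W.
Proof.
case=> vs [es [[Hs Hu Hue Ha Hl] [-> _]]].
split; first by rewrite inE mem_head.
by rewrite inE -Hl mem_last.
Qed.

Lemma path_W x y W P : xypath x y W P -> forall v, v \in W -> v = x \/ v \in vset P.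
Proof.
case=> vs [es [[Hs Hu Hue Ha Hl] [-> ->]]] v.
rewrite inE in_cons => /orP[/eqP->|]; first by left.
move=> Hv; right.
elim: vs x es Hs Ha Hv {Hu Hue Hl} => [|w vs IH] x [|e es] //= [Hs] /andP[Hj Ha].
rewrite in_cons => /orP[/eqP->|Hv].
  rewrite inE; apply/existsP; exists e; rewrite inE mem_head /=.
  by move: Hj; rewrite /Defs.joins /= => /orP[/andP[_ ->]|/andP[-> _]]; rewrite ?orbT.
have := IH w es Hs Ha Hv; rewrite !inE => /existsP[f]; rewrite inE => /andP[Hf Hf'].
by apply/existsP; exists f; rewrite inE in_cons Hf orbT.
Qed.

Lemma path_edge f x y : joins f x y -> x != y -> xypath x y [set x; y] [set f].
Proof.
move=> Hj Hxy; exists [:: y], [:: f]; split; first by split=> //=; rewrite ?inE ?Hxy ?Hj.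
split; apply/setP => v; rewrite !inE //.
Qed.

Lemma path_cat x y z W1 P1 W2 P2 :
  xypath x y W1 P1 -> xypath y z W2 P2 ->
  (forall v, v \in W1 -> v \in W2 -> v = y) -> [disjoint P1 & P2] ->
  xypath x z (W1 :|: W2) (P1 :|: P2).
Proof.
case=> vs1 [es1 [[Hs1 Hu1 Hue1 Ha1 Hl1] [-> ->]]].
case=> vs2 [es2 [[Hs2 Hu2 Hue2 Ha2 Hl2] [-> ->]]] HW HP.
exists (vs1 ++ vs2), (es1 ++ es2); split; first split.
- by rewrite !size_cat Hs1 Hs2.
- rewrite -cat_cons cat_uniq Hu1 /=; move: Hu2 => /= /andP[Hy ->]; rewrite andbT.
  apply/hasPn => v Hv; apply/negP => Hv1.
  have := HW v; rewrite in_set Hv1 in_set in_cons Hv orbT => /(_ erefl erefl) Hvy.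
  by move: Hy; rewrite -Hvy Hv.
- rewrite cat_uniq Hue1 Hue2 /= andbT; apply/hasPn => e He; apply/negP => He1.
  by move: HP => /disjE /(_ e); rewrite !in_set He He1 => /(_ erefl erefl).
- rewrite -cat_cons (lastI x vs1) Hl1 -cats1 -catA /=.
  rewrite zip_cat ?size_belast // zip_cat ?size_zip ?size_belast ?Hs1 ?minnn //.
  by rewrite all_cat -zip_belast Ha1.
- by rewrite last_cat Hl1.
split; apply/setP => v; rewrite !inE ?mem_cat //.
case: (v == y) /eqP => [->|_]; last by case: (v == x); case: (v \in vs1).
have := mem_last x vs1; rewrite Hl1 in_cons => /orP[->|->]; by rewrite ?orbT.
Qed.

Lemma path_rev x y W P : xypath x y W P -> xypath y x W P.
Proof.
case=> vs [es [[Hs Hu Hue Ha Hl] [-> ->]]].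
have Hr : y :: rev (belast x vs) = rev (x :: vs) by rewrite (lastI x vs) rev_rcons Hl.
have Hr2 : y :: rev (belast x vs) = rcons (rev vs) x by rewrite Hr rev_cons.
exists (rev (belast x vs)), (rev es); split; first split.
- by rewrite !size_rev size_belast.
- by rewrite Hr rev_uniq.
- by rewrite rev_uniq.
- rewrite zip_belast.
  have -> : belast y (rev (belast x vs)) = rev vs.
    by move: Hr2; rewrite lastI => /rcons_inj [].
  rewrite -rev_zip ?size_rev ?size_belast // -rev_zip; last by rewrite size_zip size_belast minnn.
  by rewrite all_rev all_zip_swap -zip_belast.
- by move: (congr1 (last y) Hr2); rewrite last_rcons /=.
split; apply/setP => v; rewrite !inE ?mem_rev //.
by rewrite -in_cons -[in RHS]in_cons (lastI x vs) Hl mem_rcons.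
Qed.


Lemma I1P (T : finType) (A B : {set T}) y :
  A :&: B = [set y] <-> [/\ y \in A, y \in B & forall v, v \in A -> v \in B -> v = y].
Proof.
split=> [H|[HA HB H]].
  have : y \in A :&: B by rewrite H set11.
  rewrite inE => /andP[-> ->]; split=> // v Hv Hv'.
  by apply/set1P; rewrite -H inE Hv Hv'.
apply/setP => v; rewrite !inE; apply/idP/idP.
  by move=> /andP[? ?]; apply/eqP/H.
by move/eqP->; rewrite HA HB.
Qed.

Lemma vsetP (F : {set E}) v : reflect (exists2 e, e \in F & (e1 e == v) || (e2 e == v)) (v \in vset F).
Proof.
rewrite inE; apply: (iffP existsP) => [[e /andP[? ?]]|[e ? ?]]; first by exists e.
by exists e; apply/andP.
Qed.

Lemma vsetS (A B : {set E}) : A \subset B -> forall v, v \in vset A -> v \in vset B.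
Proof. by move=> /subsetP H v /vsetP[e He Hv]; apply/vsetP; exists e => //; apply: H. Qed.

Lemma in_vset e (F : {set E}) : e \in F -> e1 e \in vset F /\ e2 e \in vset F.
Proof. by move=> He; split; apply/vsetP; exists e; rewrite ?eqxx ?orbT. Qed.

Lemma vset1 f : vset [set f] = [set e1 f; e2 f].
Proof.
apply/setP => v; apply/vsetP/idP; rewrite !inE.
  by move=> [e /set1P -> /orP[/eqP->|/eqP->]]; rewrite eqxx ?orbT.
by move=> /orP[/eqP->|/eqP->]; exists f; rewrite ?set11 ?eqxx ?orbT.
Qed.

Lemma sgnU (A B : {set E}) : [disjoint A & B] -> sgn neg (A :|: B) = sgn neg A (+) sgn neg B.
Proof.
move=> /disjE H; rewrite /sgn.
have -> : [set e in A :|: B | neg e] = [set e in A | neg e] :|: [set e in B | neg e].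
  by apply/setP => e; rewrite !inE andb_orl.
rewrite cardsU.
have -> : [set e in A | neg e] :&: [set e in B | neg e] = set0.
  apply/setP => e; rewrite !inE; case HA: (e \in A); case HB: (e \in B); rewrite /= ?andbF //.
  by case: (H e).
by rewrite cards0 subn0 oddD.
Qed.

Lemma sgn1 f : sgn neg [set f] = neg f.
Proof.
rewrite /sgn; case Hf: (neg f).
  have -> : [set e in [set f] | neg e] = [set f].
    by apply/setP => e; rewrite !inE; case: (e =P f) => // ->.
  by rewrite cards1.
have -> : [set e in [set f] | neg e] = set0.
  by apply/setP => e; rewrite !inE; case: (e =P f) => // ->; rewrite Hf.
by rewrite cards0.
Qed.

Lemma sgn0 : sgn neg set0 = false.
Proof.
rewrite /sgn; have -> : [set e in (set0 : {set E}) | neg e] = set0.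
  by apply/setP => e; rewrite !inE.
by rewrite cards0.
Qed.

Lemma loop_circ l x : e1 l = x -> e2 l = x -> neg l ->
  unbalanced_circuit e1 e2 neg [set l] /\ vset [set l] = [set x].
Proof.
move=> H1 H2 Hn.
have Hv : vset [set l] = [set x] by rewrite vset1 H1 H2 setUid.
split=> //; split; last by rewrite /sgn -/(sgn neg _) sgn1.
split.
- by apply/set0Pn; exists l; rewrite set11.
- move=> u v; rewrite Hv => /set1P -> /set1P ->.
  by exists [set x], set0; split; [apply: path_nil | apply: sub0set].
- move=> v; rewrite Hv => /set1P ->.
  by rewrite /deg big_set1 H1 H2 eqxx.
Qed.

Lemma tadL x z y2 W1 Q W2 P2 C :
  xypath x z W1 Q -> xypath z y2 W2 P2 -> W2 :&: vset C = [set y2] ->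
  unbalanced_circuit e1 e2 neg C ->
  (forall v, v \in W1 -> v \in W2 :|: vset C -> v = z) -> [disjoint Q & P2] ->
  tadpole e1 e2 neg x (Q :|: (P2 :|: C)) C.
Proof.
move=> HQ HP2 HI HC HX HD; split=> //.
exists y2, (W1 :|: W2), (Q :|: P2); split.
- by apply: path_cat HQ HP2 _ HD => v H1 H2; apply: HX; rewrite // in_setU H2.
- move/I1P: HI => [Hy2 Hy2' HI]; apply/I1P; split=> //; first by rewrite in_setU Hy2 orbT.
  move=> v; rewrite in_setU => /orP[Hv Hv'|]; last exact: HI.
  have Hz := HX v Hv; rewrite in_setU Hv' orbT in Hz; have {}Hz := Hz erefl.
  by apply: HI => //; rewrite Hz; case: (path_ends HP2).
- by rewrite setUA.
Qed.

Lemma tadR y1 z z' W1 P1 W2 Q C :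
  xypath y1 z W1 P1 -> W1 :&: vset C = [set y1] -> xypath z z' W2 Q ->
  (forall v, v \in W1 :|: vset C -> v \in W2 -> v = z) -> [disjoint P1 & Q] ->
  xypath y1 z' (W1 :|: W2) (P1 :|: Q) /\ (W1 :|: W2) :&: vset C = [set y1].
Proof.
move=> HP HI HQ HX HD; split.
  by apply: path_cat HP HQ _ HD => v H1 H2; apply: HX; rewrite // in_setU H1.
move/I1P: HI => [Hy Hy' HI]; apply/I1P; split=> //; first by rewrite in_setU Hy.
move=> v; rewrite in_setU => /orP[Hv Hv'|Hv Hv']; first exact: HI.
have Hz := HX v; rewrite in_setU Hv' orbT in Hz; have {}Hz := Hz erefl Hv.
by apply: HI => //; rewrite Hz; case: (path_ends HP).
Qed.

Lemma setUACtac (A B C D : {set E}) : (A :|: B) :|: (C :|: D) = B :|: (A :|: C) :|: D :> {set E}.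
Proof. by apply/setP => e; rewrite !inE; case: (e \in A); case: (e \in B); case: (e \in C). Qed.

Lemma barbellJ y1 z y2 W1 P1 C1 W2 P2 C2 :
  xypath y1 z W1 P1 -> W1 :&: vset C1 = [set y1] -> unbalanced_circuit e1 e2 neg C1 ->
  xypath z y2 W2 P2 -> W2 :&: vset C2 = [set y2] -> unbalanced_circuit e1 e2 neg C2 ->
  (forall v, v \in W1 :|: vset C1 -> v \in W2 :|: vset C2 -> v = z) ->
  [disjoint P1 :|: C1 & P2 :|: C2] ->
  barbell e1 e2 neg ((P1 :|: C1) :|: (P2 :|: C2)).
Proof.
move=> HP1 HI1 HC1 HP2 HI2 HC2 HX HD.
move/disjE: HD => HD.
have [Hy1 Hz1] := path_ends HP1; have [Hz2 Hy2] := path_ends HP2.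
move/I1P: HI1 => [Hy1a Hy1b HI1]; move/I1P: HI2 => [Hy2a Hy2b HI2].
exists C1, C2; split=> //.
have HDC : [disjoint C1 & C2].
  by apply/disjE => e H1 H2; apply: (HD e); rewrite in_setU ?H1 ?H2 orbT.
have HDP : [disjoint P1 & P2].
  by apply/disjE => e H1 H2; apply: (HD e); rewrite in_setU ?H1 ?H2.
case: (y1 =P z) => [E1|N1]; [case: (y2 =P z) => [E2|N2]|].
- left; subst y1 y2.
  have [_ ->] := path_xx HP1; have [_ ->] := path_xx HP2.
  split=> //; last by rewrite !set0U.
  apply/eqP/cards1P; exists z; apply/I1P; split=> // v H1 H2.
  by apply: HX; rewrite in_setU ?H1 ?H2 orbT.
- right; exists y1, y2, (W1 :|: W2), (P1 :|: P2); split; last first.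
    by rewrite setUACtac.
  split=> //.
  + apply/disjE => v H1 H2; have Hv := HX v; rewrite !in_setU H1 H2 !orbT in Hv.
    by have {}Hv := Hv erefl erefl; subst v; apply: N2; symmetry; apply: HI2.
  + by apply: path_cat HP1 HP2 _ HDP => v H1 H2; apply: HX; rewrite in_setU ?H1 ?H2.
  + apply/setP => v; rewrite in_setI !in_setU !in_set1; apply/idP/idP; last first.
      by move=> /orP[/eqP->|/eqP->]; rewrite ?Hy1a ?Hy1b ?Hy2a ?Hy2b ?orbT.
    move=> /andP[/orP[Hv|Hv] /orP[Hv'|Hv']].
    * by rewrite (HI1 v Hv Hv') eqxx.
    * have := HX v; rewrite !in_setU Hv Hv' !orbT => /(_ erefl erefl) Ez; subst v.
      by rewrite (HI2 z Hz2 Hv') eqxx orbT.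
    * have := HX v; rewrite !in_setU Hv Hv' !orbT => /(_ erefl erefl) Ez; subst v.
      by rewrite (HI1 z Hz1 Hv') eqxx.
    * by rewrite (HI2 v Hv Hv') eqxx orbT.
- right; exists y1, y2, (W1 :|: W2), (P1 :|: P2); split; last first.
    by rewrite setUACtac.
  split=> //.
  + apply/disjE => v H1 H2; have Hv := HX v; rewrite !in_setU H1 H2 !orbT in Hv.
    by have {}Hv := Hv erefl erefl; subst v; apply: N1; symmetry; apply: HI1.
  + by apply: path_cat HP1 HP2 _ HDP => v H1 H2; apply: HX; rewrite in_setU ?H1 ?H2.
  + apply/setP => v; rewrite in_setI !in_setU !in_set1; apply/idP/idP; last first.
      by move=> /orP[/eqP->|/eqP->]; rewrite ?Hy1a ?Hy1b ?Hy2a ?Hy2b ?orbT.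
    move=> /andP[/orP[Hv|Hv] /orP[Hv'|Hv']].
    * by rewrite (HI1 v Hv Hv') eqxx.
    * have := HX v; rewrite !in_setU Hv Hv' !orbT => /(_ erefl erefl) Ez; subst v.
      by rewrite (HI2 z Hz2 Hv') eqxx orbT.
    * have := HX v; rewrite !in_setU Hv Hv' !orbT => /(_ erefl erefl) Ez; subst v.
      by rewrite (HI1 z Hz1 Hv') eqxx.
    * by rewrite (HI2 v Hv Hv') eqxx orbT.
Qed.

End PathLib.
Set Implicit Arguments.
Unset Strict Implicit.
Unset Printing Implicit Defensive.


Definition adm (r : nat) (c s1 s2 s3 s4 : bool) : bool :=
  if r == 0 then [&& s1 == c, s2 == c, s3 == c & s4 == c]
  else if r == 1 then (s1 + s2 + s3 + s4 == 2)
  else ~~ (s1 (+) s2 (+) s3 (+) s4).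

Lemma adm_flip r c b s1 s2 s3 s4 : adm r (c (+) b) s1 s2 s3 s4 ->
  adm r c (s1 (+) b) (s2 (+) b) (s3 (+) b) (s4 (+) b).
Proof.
rewrite /adm; case: (r == 0); case: (r == 1);
by case: s1; case: s2; case: s3; case: s4; case: b; case: c.
Qed.

Ltac ex4 := solve [do 4! (exists true + exists false); by []].

Lemma adm_B2 r c s1 s2 s3 s4 : adm r.+1 c s1 s2 s3 s4 ->
  exists p1 p2 p3 p4 : bool, (p1 + p2 + p3 + p4 == 2) &&
    adm r c (s1 (+) p1) (s2 (+) p2) (s3 (+) p3) (s4 (+) p4).
Proof.
case: r => [|[|r]]; rewrite /adm /=;
case: s1; case: s2; case: s3; case: s4; case: c; move=> H; first [by [] | ex4].
Qed.

Lemma adm_final r c th : 0 < r -> (r = 1 -> th = false) -> adm r c th th true true.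
Proof.
case: r => [//|[|r]] _ H; rewrite /adm /=; first by rewrite (H erefl).
by clear H; case: th.
Qed.

Section Main.
Variables (V E : finType) (e1 e2 : E -> V) (neg : E -> bool) (n : nat)
  (xs : nat -> V) (parts : nat -> {set E}).
Hypothesis Hdec : series_decomp e1 e2 neg n xs parts.
Hypothesis Hpsi : forall i, 0 < i <= n -> isB2 xs parts i ->
  has_psi_cover e1 e2 neg (parts i) (xs i.-1) (xs i) 2.

Local Notation vset := (vset e1 e2).
Local Notation xypath := (xypath e1 e2).

Lemma Htt i : 0 < i <= n -> two_terminal e1 e2 neg (parts i) (xs i.-1) (xs i).
Proof. by case: Hdec => [[_ H _ _ _] _]; apply: H. Qed.
Lemma Hdisj i j : 0 < i -> i < j -> j <= n -> [disjoint parts i & parts j].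
Proof. by case: Hdec => [[_ _ H _ _] _]; apply: H. Qed.
Lemma Hcov e : exists2 i, 0 < i <= n & e \in parts i.
Proof. by case: Hdec => [[_ _ _ H _] _]; apply: H. Qed.
Lemma Hint i j : 0 < i -> i < j -> j <= n ->
  vset (parts i) :&: vset (parts j) =
  if all (fun k => xs k.-1 == xs k) (iota i.+1 (j - i).-1) then [set xs i] else set0.
Proof. by case: Hdec => _ H; apply: H. Qed.

Definition U k e := has (fun i => e \in parts i) (iota 1 k).
Definition VU k v := (v == xs 0) || has (fun i => v \in vset (parts i)) (iota 1 k).

Lemma iotaS1 k : iota 1 k.+1 = iota 1 k ++ [:: k.+1].
Proof. by rewrite -[k.+1]addn1 iotaD /= addnC. Qed.

Lemma mem_iota1 i k : (i \in iota 1 k) = (0 < i <= k).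
Proof. by rewrite mem_iota add1n ltnS. Qed.

Lemma U_S k e : U k.+1 e = U k e || (e \in parts k.+1).
Proof. by rewrite /U iotaS1 has_cat /= orbF. Qed.

Lemma VU_S k v : VU k.+1 v = VU k v || (v \in vset (parts k.+1)).
Proof. by rewrite /VU iotaS1 has_cat /= orbF orbA. Qed.

Lemma VU_mono k v : VU k v -> VU k.+1 v.
Proof. by rewrite VU_S => ->. Qed.

Lemma VU_new k v : v \in vset (parts k.+1) -> VU k.+1 v.
Proof. by rewrite VU_S => ->; rewrite orbT. Qed.

Lemma U_new k e : k < n -> e \in parts k.+1 -> ~~ U k e.
Proof.
move=> Hk He; apply/hasPn => i; rewrite mem_iota1 => /andP[Hi Hik].
by rewrite (disjointFl (Hdisj Hi _ Hk) He) // ltnS.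
Qed.

Lemma U_VU k e : U k e -> VU k (e1 e) /\ VU k (e2 e).
Proof.
case/hasP => i Hi He; have [H1 H2] := in_vset e1 e2 He.
by split; apply/orP; right; apply/hasP; exists i.
Qed.

Lemma vset_VU k (F : {set E}) : (forall e, e \in F -> U k e) -> forall v, v \in vset F -> VU k v.
Proof.
move=> H v /(vsetP e1 e2)[e He /orP[/eqP<-|/eqP<-]]; by case: (U_VU (H e He)) => ? ?.
Qed.

Lemma xs_VU k : k <= n -> VU k (xs k).
Proof.
case: k => [|k] Hk; first by rewrite /VU eqxx.
apply/orP; right; apply/hasP; exists k.+1; first by rewrite mem_iota1 /= leqnn.
by case: (Htt (i := k.+1)) => // _ _ _ ?.
Qed.

Lemma xs_part k : k < n -> xs k \in vset (parts k.+1) /\ xs k.+1 \in vset (parts k.+1).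
Proof. by move=> Hk; case: (Htt (i := k.+1)) => // _ _ ? ?. Qed.

Lemma chain i m : all (fun k => xs k.-1 == xs k) (iota i.+1 m) -> xs (i + m) = xs i.
Proof.
elim: m i => [|m IH] i /=; first by rewrite addn0.
move=> /andP[/eqP H1 H2]; by rewrite addnS -addSn IH.
Qed.

Lemma Lsep0 i k v : 0 < i <= k -> k < n -> v \in vset (parts i) ->
  v \in vset (parts k.+1) -> v = xs k.
Proof.
move=> /andP[Hi Hik] Hk Hv Hv'.
have := Hint Hi (_ : i < k.+1) Hk; rewrite ltnS => /(_ Hik).
case: ifP => Hall HI; last by move: (Hv); rewrite -[_ \in _]andbT -Hv' -in_setI HI inE.
have := chain Hall; have -> : i + (k.+1 - i).-1 = k by lia.
move=> ->; apply/set1P; by rewrite -HI inE Hv Hv'.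
Qed.

Lemma Lsep k v : k < n -> VU k v -> v \in vset (parts k.+1) -> v = xs k.
Proof.
move=> Hk /orP[/eqP->|/hasP[i Hi Hv]] Hv'.
  case: k Hk Hv' => [//|k] Hk Hv'.
  apply: (@Lsep0 1) => //; first by case: (xs_part (k := 0)) => //; lia.
have Hi2 : 0 < i <= k by rewrite -mem_iota1. exact: Lsep0 Hi2 Hk Hv Hv'.
Qed.

Lemma loc_W D x y W Q : xypath x y W Q -> x \in vset D -> Q \subset D ->
  forall v, v \in W -> v \in vset D.
Proof.
move=> HP Hx HQ v /(path_W HP) [->//|]; exact: vsetS.
Qed.

Lemma B0list_S k : B0list xs parts k.+1 =
  B0list xs parts k ++ (if isB0 xs k.+1 then [:: parts k.+1] else [::]).
Proof.
by rewrite /B0list iotaS1 filter_cat map_cat /=; case: ifP.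
Qed.

Lemma cB2_S k : count (isB2 xs parts) (iota 1 k.+1) =
  count (isB2 xs parts) (iota 1 k) + isB2 xs parts k.+1.
Proof. by rewrite iotaS1 count_cat /= addn0. Qed.

Lemma classify k : k < n ->
  [\/ [/\ xs k.+1 = xs k, isB0 xs k.+1 &
         exists l, [/\ parts k.+1 = [set l], e1 l = xs k, e2 l = xs k & neg l]],
      [/\ ~~ isB02 xs parts k.+1, xs k != xs k.+1 &
         exists f, parts k.+1 = [set f] /\ joins e1 e2 f (xs k) (xs k.+1)]
    | isB2 xs parts k.+1].
Proof.
move=> Hk; case: (Htt (i := k.+1)) => //= Hne _ Hx Hy Hiff.
case: (xs k =P xs k.+1) => Heq.
  have [l [Hl H1 H2 Hn]] := (proj1 Hiff Heq).
  by constructor 1; split; [rewrite Heq | rewrite /isB0 /= Heq | exists l].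
case Hc: (1 < #|parts k.+1|).
  by constructor 3; rewrite /isB2 /= Hc andbT; apply/eqP.
constructor 2; split.
- by rewrite /isB02 /isB0 /isB2 /= Hc andbF orbF; apply/eqP.
- by apply/eqP.
have : #|parts k.+1| == 1.
  by rewrite eqn_leq leqNgt Hc /= card_gt0.
case/cards1P => f Hf; exists f; split=> //.
move: Hx Hy; rewrite Hf vset1 !inE /Defs.joins.
move=> /orP[/eqP Ha|/eqP Ha] /orP[/eqP Hb|/eqP Hb].
- by exfalso; apply: Heq; rewrite Ha Hb.
- by rewrite Ha Hb !eqxx.
- by rewrite Ha Hb !eqxx orbT.
- by exfalso; apply: Heq; rewrite Ha Hb.
Qed.


Definition PT k (s : bool) (P : {set E}) :=
  (exists W, xypath (xs 0) (xs k) W P /\ forall v, v \in W -> VU k v) /\ sgn neg P = s.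

Definition TT (T : {set E}) := exists i C,
  [/\ first_B02 xs parts n i, tadpole e1 e2 neg (xs 0) T C & C \subset parts i].

Definition RT k (R : {set E}) := exists i,
  [/\ 0 < i <= k, isB02 xs parts i & forall j, i < j <= k -> ~~ isB02 xs parts j] /\
  exists y W P C, [/\ unbalanced_circuit e1 e2 neg C, C \subset parts i,
     xypath y (xs k) W P, W :&: vset C = [set y] & R = P :|: C] /\
     (forall v, v \in W -> VU k v).

Lemma disj_new k (A B : {set E}) : k < n -> (forall e, e \in A -> U k e) ->
  B \subset parts k.+1 -> [disjoint A & B].
Proof.
move=> Hk HA HB; apply/disjE => e H1 H2.
by move: (HA e H1); rewrite (negbTE (U_new Hk (subsetP HB e H2))).
Qed.

Lemma locW k x y W Q : k < n -> xypath x y W Q -> x \in vset (parts k.+1) ->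
  Q \subset parts k.+1 -> forall v, v \in W -> v \in vset (parts k.+1).
Proof. by move=> _ HP Hx HQ; apply: loc_W HP Hx HQ. Qed.

Lemma PT_ext k s P W Q : k < n -> PT k s P -> (forall e, e \in P -> U k e) ->
  xypath (xs k) (xs k.+1) W Q -> Q \subset parts k.+1 ->
  PT k.+1 (s (+) sgn neg Q) (P :|: Q).
Proof.
move=> Hk [[W0 [HP HW0]] Hs] HU HQ HQs.
have HD := disj_new Hk HU HQs.
have HWQ := locW Hk HQ (proj1 (xs_part Hk)) HQs.
split; last by rewrite sgnU // Hs.
exists (W0 :|: W); split.
  apply: path_cat HP HQ _ HD => v H1 H2.
  exact: Lsep Hk (HW0 v H1) (HWQ v H2).
move=> v; rewrite in_setU => /orP[H|H]; first exact/VU_mono/HW0.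
exact/VU_new/HWQ.
Qed.

Lemma RT_ext k R W Q : k < n -> RT k R -> (forall e, e \in R -> U k e) ->
  xypath (xs k) (xs k.+1) W Q -> Q \subset parts k.+1 -> ~~ isB02 xs parts k.+1 ->
  RT k.+1 (R :|: Q).
Proof.
move=> Hk [i [[Hi HiB Hj] [y [W0 [P [C [[HC HCs HP HI HR] HW0]]]]]]] HU HQ HQs HB.
have HWQ := locW Hk HQ (proj1 (xs_part Hk)) HQs.
have HUP : forall e, e \in P -> U k e by move=> e He; apply: HU; rewrite HR inE He.
have HUC : forall e, e \in C -> U k e by move=> e He; apply: HU; rewrite HR inE He orbT.
have Hcond : forall v, v \in W0 :|: vset C -> v \in W -> v = xs k.
  move=> v; rewrite in_setU => /orP[H|H] H'.
    exact: Lsep Hk (HW0 v H) (HWQ v H').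
  exact: Lsep Hk (vset_VU HUC H) (HWQ v H').
have [HP' HI'] := tadR HP HI HQ Hcond (disj_new Hk HUP HQs).
exists i; split; first split.
- by case/andP: Hi => -> /leqW ->.
- done.
- move=> j /andP[Hij]; rewrite leq_eqVlt => /orP[/eqP->//|]; rewrite ltnS => Hjk.
  by apply: Hj; rewrite Hij.
exists y, (W0 :|: W), (P :|: Q), C; split; first split => //.
  by rewrite HR; apply/setP => e; rewrite !inE; case: (e \in P); case: (e \in C); case: (e \in Q).
move=> v; rewrite in_setU => /orP[H|H]; first exact/VU_mono/HW0.
exact/VU_new/HWQ.
Qed.

Lemma RT_new k y W P C : k < n -> isB02 xs parts k.+1 -> unbalanced_circuit e1 e2 neg C ->
  xypath y (xs k.+1) W P -> W :&: vset C = [set y] -> P :|: C \subset parts k.+1 ->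
  RT k.+1 (P :|: C).
Proof.
move=> Hk HB HC HP HI HPC.
have HPs : P \subset parts k.+1 by apply: subset_trans HPC; apply: subsetUl.
have HCs : C \subset parts k.+1 by apply: subset_trans HPC; apply: subsetUr.
have Hy : y \in vset (parts k.+1).
  by move/I1P: HI => [_ Hy _]; apply: vsetS Hy.
exists k.+1; split; first split; rewrite ?leqnn //.
  by move=> j /andP[H1 H2]; exfalso; move: (leq_trans H1 H2); rewrite ltnn.
exists y, W, P, C; split => //.
by move=> v Hv; apply/VU_new/(locW Hk HP Hy HPs).
Qed.

Lemma TT_new k W0 Q y W P C : k < n -> first_B02 xs parts n k.+1 ->
  xypath (xs 0) (xs k) W0 Q -> (forall v, v \in W0 -> VU k v) ->
  (forall e, e \in Q -> U k e) -> xypath (xs k) y W P -> W :&: vset C = [set y] ->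
  unbalanced_circuit e1 e2 neg C -> P :|: C \subset parts k.+1 -> TT (Q :|: (P :|: C)).
Proof.
move=> Hk HF HQ HW0 HU HP HI HC HPC.
have HPs : P \subset parts k.+1 by apply: subset_trans HPC; apply: subsetUl.
have HCs : C \subset parts k.+1 by apply: subset_trans HPC; apply: subsetUr.
exists k.+1, C; split => //.
have Hc : forall v, v \in W0 -> v \in W :|: vset C -> v = xs k.
  move=> v Hv; rewrite in_setU => /orP[H|H].
    exact: Lsep Hk (HW0 v Hv) (locW Hk HP (proj1 (xs_part Hk)) HPs H).
  exact: Lsep Hk (HW0 v Hv) (vsetS HCs H).
exact: tadL HQ HP HI HC Hc (disj_new Hk HU HPs).
Qed.

Lemma bar_new k R y W P C : k < n -> RT k R -> (forall e, e \in R -> U k e) ->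
  xypath (xs k) y W P -> W :&: vset C = [set y] -> unbalanced_circuit e1 e2 neg C ->
  P :|: C \subset parts k.+1 -> signed_circuit e1 e2 neg (R :|: (P :|: C)).
Proof.
move=> Hk [i [_ [y1 [W1 [P1 [C1 [[HC1 _ HP1 HI1 HR] HW1]]]]]]] HU HP HI HC HPC.
have HPs : P \subset parts k.+1 by apply: subset_trans HPC; apply: subsetUl.
have HCs : C \subset parts k.+1 by apply: subset_trans HPC; apply: subsetUr.
have HUC : forall e, e \in C1 -> U k e by move=> e He; apply: HU; rewrite HR inE He orbT.
have Hc : forall v, v \in W1 :|: vset C1 -> v \in W :|: vset C -> v = xs k.
  move=> v; rewrite !in_setU => /orP[H|H] /orP[H'|H'].
  - exact: Lsep Hk (HW1 v H) (locW Hk HP (proj1 (xs_part Hk)) HPs H').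
  - exact: Lsep Hk (HW1 v H) (vsetS HCs H').
  - exact: Lsep Hk (vset_VU HUC H) (locW Hk HP (proj1 (xs_part Hk)) HPs H').
  - exact: Lsep Hk (vset_VU HUC H) (vsetS HCs H').
have Hd : [disjoint P1 :|: C1 & P :|: C] by apply: disj_new Hk _ HPC; rewrite -HR.
right; rewrite HR; exact: barbellJ HP1 HI1 HC1 HP HI HC Hc Hd.
Qed.


Lemma pattern (a b c d : {set E}) (p1 p2 p3 p4 : bool) :
  sgn neg a = false -> sgn neg b = false -> sgn neg c -> sgn neg d ->
  (p1 + p2 + p3 + p4 == 2) ->
  exists Q1 Q2 Q3 Q4, [/\ [/\ sgn neg Q1 = p1, sgn neg Q2 = p2, sgn neg Q3 = p3 & sgn neg Q4 = p4]
     & perm_eq [:: Q1; Q2; Q3; Q4] [:: a; b; c; d]].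
Proof.
move=> Ha Hb Hc Hd; case: p1; case: p2; case: p3; case: p4 => H; try (by []);
solve [ (exists c, d, a, b + exists c, a, d, b + exists c, a, b, d + exists a, c, d, b
      + exists a, c, b, d + exists a, b, c, d);
  split; [split; by rewrite ?Ha ?Hb ?Hc ?Hd | apply/permP => q /=; lia]].
Qed.

Lemma psi_dest D x y : has_psi_cover e1 e2 neg D x y 2 ->
  exists a b c d l1 l2 r1 r2 (Cs : seq {set E}),
  [/\ [/\ (exists W, xypath x y W a) /\ sgn neg a = false,
          (exists W, xypath x y W b) /\ sgn neg b = false,
          (exists W, xypath x y W c) /\ sgn neg c &
          (exists W, xypath x y W d) /\ sgn neg d],
      [/\ exists C, tadpole e1 e2 neg x l1 C, exists C, tadpole e1 e2 neg x l2 C,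
          exists C, tadpole e1 e2 neg y r1 C & exists C, tadpole e1 e2 neg y r2 C],
      forall F, F \in Cs -> signed_circuit e1 e2 neg F,
      forall F, F \in [:: a; b; c; d; l1; l2; r1; r2] ++ Cs -> F \subset D &
      forall e, e \in D ->
        count (fun F : {set E} => e \in F) ([:: a; b; c; d; l1; l2; r1; r2] ++ Cs) = 6].
Proof.
case=> Pp [Pn [Tx [Ty [Cs [[HPp HPn HTx HTy] [[Hp Hn Ht1 Ht2 Hc] [Hs Hcnt]]]]]]].
case: Pp HPp Hp Hs Hcnt => [|a [|b [|]]] //= _ Hp Hs Hcnt.
case: Pn HPn Hn Hs Hcnt => [|c [|d [|]]] //= _ Hn Hs Hcnt.
case: Tx HTx Ht1 Hs Hcnt => [|l1 [|l2 [|]]] //= _ Ht1 Hs Hcnt.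
case: Ty HTy Ht2 Hs Hcnt => [|r1 [|r2 [|]]] //= _ Ht2 Hs Hcnt.
exists a, b, c, d, l1, l2, r1, r2, Cs; split => //.
- split.
  + by case: (Hp a ltac:(by rewrite !inE eqxx ?orbT)) => ? /negbTE.
  + by case: (Hp b ltac:(by rewrite !inE eqxx ?orbT)) => ? /negbTE.
  + exact: (Hn c ltac:(by rewrite !inE eqxx ?orbT)).
  + exact: (Hn d ltac:(by rewrite !inE eqxx ?orbT)).
- split.
  + exact: (Ht1 l1 ltac:(by rewrite !inE eqxx ?orbT)).
  + exact: (Ht1 l2 ltac:(by rewrite !inE eqxx ?orbT)).
  + exact: (Ht2 r1 ltac:(by rewrite !inE eqxx ?orbT)).
  + exact: (Ht2 r2 ltac:(by rewrite !inE eqxx ?orbT)).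
Qed.

Definition fc k (L : seq {set E}) :=
  forall e, count (fun F : {set E} => e \in F) L = if U k e then 6 else 0.

Lemma fc_U k (L : seq {set E}) (X : {set E}) (e : E) : fc k L -> X \in L -> e \in X -> U k e.
Proof.
move=> H HX He; have := H e; case: (U k e) => // Hc.
have : 0 < count (fun F : {set E} => e \in F) L by rewrite -has_count; apply/hasP; exists X.
by rewrite Hc.
Qed.

Lemma count_sub0 (L : seq {set E}) (D : {set E}) (e : E) : (forall F, F \in L -> F \subset D) -> e \notin D ->
  count (fun F : {set E} => e \in F) L = 0.
Proof.
move=> H He; apply/eqP; rewrite -leqn0 leqNgt -has_count; apply/hasPn => F HF.
by apply/negP => h; apply: (negP He); apply: (subsetP (H F HF)).
Qed.

Definition StA k := (forall j, 0 < j <= k -> ~~ isB02 xs parts j) /\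
  exists W Q, [/\ xypath (xs 0) (xs k) W Q, forall v, v \in W -> VU k v &
                  forall e, (e \in Q) = U k e].

Definition StB k := exists c, forall s1 s2 s3 s4,
  adm (count (isB2 xs parts) (iota 1 k)) c s1 s2 s3 s4 ->
  exists F0 P1 P2 P3 P4 T1 T2 R1 R2,
   [/\ forall F, F \in F0 -> signed_circuit e1 e2 neg F,
       [/\ PT k s1 P1, PT k s2 P2, PT k s3 P3 & PT k s4 P4],
       [/\ TT T1, TT T2, RT k R1 & RT k R2] &
       fc k (F0 ++ B0list xs parts k ++ B0list xs parts k ++
             [:: P1; P2; P3; P4; T1; T2; R1; R2])].

Lemma noB02 k : (forall j, 0 < j <= k -> ~~ isB02 xs parts j) ->
  B0list xs parts k = [::] /\ count (isB2 xs parts) (iota 1 k) = 0.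
Proof.
move=> H; split.
  rewrite /B0list; have -> : [seq i <- iota 1 k | isB0 xs i] = [::] => //.
  apply/eqP; rewrite -size_eq0 size_filter; apply/eqP/eqP.
  rewrite -leqn0 leqNgt -has_count; apply/hasPn => j; rewrite mem_iota1 => Hj.
  by move: (H j Hj); rewrite /isB02 negb_or => /andP[].
apply/eqP; rewrite -leqn0 leqNgt -has_count; apply/hasPn => j; rewrite mem_iota1 => Hj.
by move: (H j Hj); rewrite /isB02 negb_or => /andP[].
Qed.

Lemma PT_B0 k s P : xs k.+1 = xs k -> PT k s P -> PT k.+1 s P.
Proof.
move=> Hx [[W [HP HW]] Hs]; split=> //; exists W; split; first by rewrite Hx.
by move=> v /HW /VU_mono.
Qed.


Ltac gen_nat :=
  repeat match goal with
  | H : context [nat_of_bool ?b] |- _ =>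
      lazymatch b with true => fail | false => fail | _ =>
        let x := fresh "x" in set (x := nat_of_bool b) in *; clearbody x end
  | |- context [nat_of_bool ?b] =>
      lazymatch b with true => fail | false => fail | _ =>
        let x := fresh "x" in set (x := nat_of_bool b) in *; clearbody x end
  end.

Ltac gen_nat2 :=
  repeat match goal with
  | |- context [nat_of_bool ?b] =>
      lazymatch b with true => fail | false => fail | _ =>
        let x := fresh "x" in set x := nat_of_bool b; clearbody x end
  end.

Ltac finish_lia := gen_nat2; repeat match goal with H : _ |- _ => clear H end; intros; lia.

Ltac falsify_loc He :=
  repeat match goal with |- context [?e \in ?X] =>
    match goal with H : X \subset _ |- _ =>
      let Hf := fresh "Hf" in
      have Hf : (e \in X) = false by
        (apply/negbTE/negP; move/(subsetP H e); rewrite He; done);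
      rewrite Hf; clear Hf
    end end.

Ltac falsify_old Hfc HUk :=
  repeat match goal with |- context [?e \in ?X] =>
      let Hf := fresh "Hf" in
      have Hf : (e \in X) = false by
        (apply/negbTE/negP;
         move/(fc_U (X := X) Hfc ltac:(by rewrite !mem_cat !inE eqxx /= ?orbT));
         rewrite HUk; done);
      rewrite Hf; clear Hf
    end.

Lemma addbK2 q s : q (+) (s (+) q) = s.
Proof. by case: q; case: s. Qed.

Lemma StA_step k : k < n -> StA k -> StA k.+1 \/ StB k.+1.
Proof.
move=> Hk [HnoB [W [Q [HQ HW HQe]]]].
have HQU : forall e, e \in Q -> U k e by move=> e; rewrite HQe.
have [B0e Br0] := noB02 HnoB.
have HPTQ : PT k (sgn neg Q) Q by split=> //; exists W.
have Hfirst : isB02 xs parts k.+1 -> first_B02 xs parts n k.+1.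
  move=> HB; split => //.
case: (classify Hk) => [[Hx HB0 [l [Hl Hl1 Hl2 Hln]]] | [HnB Hxx [f [Hf Hj]]] | HB2].
- right; exists (sgn neg Q) => s1 s2 s3 s4.
  have HnB2 : isB2 xs parts k.+1 = false by rewrite /isB2 /= Hx eqxx.
  have HB02 : isB02 xs parts k.+1 by rewrite /isB02 HB0.
  rewrite cB2_S Br0 HnB2 /adm /= => /and4P[/eqP-> /eqP-> /eqP-> /eqP->].
  have [Hlc Hlv] := loop_circ Hl1 Hl2 Hln.
  have HLs : set0 :|: [set l] \subset parts k.+1 by rewrite Hl set0U.
  have HPT := PT_B0 Hx HPTQ.
  have HI : [set xs k] :&: vset [set l] = [set xs k] by rewrite Hlv setIid.
  have HTT := TT_new Hk (Hfirst HB02) HQ HW HQU (path_nil e1 e2 (xs k)) HI Hlc HLs.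
  have HI' : [set xs k.+1] :&: vset [set l] = [set xs k.+1] by rewrite Hlv Hx setIid.
  have HRT := RT_new Hk HB02 Hlc (path_nil e1 e2 (xs k.+1)) HI' HLs.
  exists [::], Q, Q, Q, Q, (Q :|: (set0 :|: [set l])), (Q :|: (set0 :|: [set l])),
    (set0 :|: [set l]), (set0 :|: [set l]); split => //.
  move=> e; rewrite B0list_S B0e HB0 /= !in_setU in_set0 HQe U_S Hl in_set1 /=.
  case: (e =P l) => [->|_].
    rewrite (negbTE (U_new Hk (_ : l \in parts k.+1))) ?Hl ?set11 //.
  by case: (U k e).
- left; split.
    move=> j /andP[Hj1]; rewrite leq_eqVlt => /orP[/eqP->//|]; rewrite ltnS => Hj2.
    by apply: HnoB; rewrite Hj1.
  have Hfs : [set f] \subset parts k.+1 by rewrite Hf.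
  have := PT_ext Hk HPTQ HQU (path_edge Hj Hxx) Hfs.
  case=> [[W' [HP' HW']] _]; exists W', (Q :|: [set f]); split => //.
  by move=> e; rewrite in_setU HQe U_S Hf.
- right; exists false => s1 s2 s3 s4.
  have HB02 : isB02 xs parts k.+1 by rewrite /isB02 HB2 orbT.
  have HnB0 : isB0 xs k.+1 = false by move: HB2; rewrite /isB2 /isB0 => /andP[/negbTE].
  rewrite cB2_S Br0 HB2 => Hadm.
  have [a [b [c [d [l1 [l2 [r1 [r2 [Cs [[Ha Hb Hc Hd] [Hl1 Hl2 Hr1 Hr2] HCs Hsub Hcnt]]]]]]]]]]
    := psi_dest (Hpsi (i := k.+1) ltac:(by rewrite /= Hk) HB2).
  have Hw : (s1 (+) sgn neg Q) + (s2 (+) sgn neg Q) + (s3 (+) sgn neg Q) + (s4 (+) sgn neg Q) == 2.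
    by move: Hadm; rewrite /adm /=; case: s1; case: s2; case: s3; case: s4; case: (sgn neg Q).
  have [Q1 [Q2 [Q3 [Q4 [[HQ1 HQ2 HQ3 HQ4] Hperm]]]]] :=
    pattern (proj2 Ha) (proj2 Hb) (proj2 Hc) (proj2 Hd) Hw.
  have Hloc : forall X, X \in [:: Q1; Q2; Q3; Q4] ->
      (exists W, xypath (xs k) (xs k.+1) W X) /\ X \subset parts k.+1.
    move=> X; rewrite (perm_mem Hperm) => HX; split.
      2: by apply: Hsub; rewrite mem_cat; move: HX; rewrite !inE => /or4P[]->; rewrite ?orbT.
    by move: HX; rewrite !inE => /or4P[]/eqP->; [case: Ha|case: Hb|case: Hc|case: Hd].
  have HPn : forall X s, X \in [:: Q1; Q2; Q3; Q4] -> sgn neg X = s (+) sgn neg Q ->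
      PT k.+1 s (Q :|: X).
    move=> X s HX HXs; have [[W' HW'] HXs'] := Hloc X HX.
    by have := PT_ext Hk HPTQ HQU HW' HXs'; rewrite HXs addbK2.
  have HTn : forall X, X \in [:: l1; l2] -> (exists C, tadpole e1 e2 neg (xs k) X C) ->
      TT (Q :|: X).
    move=> X HX [C [HC [y [Wl [Pl [HPl HIl HXe]]]]]].
    have HXs : X \subset parts k.+1 by apply: Hsub; move: HX; rewrite !inE => /orP[]/eqP->;
      rewrite eqxx ?orbT.
    rewrite HXe; apply: TT_new Hk (Hfirst HB02) HQ HW HQU HPl HIl HC _; by rewrite -HXe.
  have HRn : forall X, X \in [:: r1; r2] -> (exists C, tadpole e1 e2 neg (xs k.+1) X C) ->
      RT k.+1 X.
    move=> X HX [C [HC [y [Wr [Pr [HPr HIr HXe]]]]]].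
    have HXs : X \subset parts k.+1 by apply: Hsub; move: HX; rewrite !inE => /orP[]/eqP->;
      rewrite eqxx ?orbT.
    rewrite HXe; apply: RT_new Hk HB02 HC (path_rev HPr) HIr _; by rewrite -HXe.
  exists Cs, (Q :|: Q1), (Q :|: Q2), (Q :|: Q3), (Q :|: Q4), (Q :|: l1), (Q :|: l2), r1, r2.
  split => //.
  + by split; apply: HPn; rewrite ?HQ1 ?HQ2 ?HQ3 ?HQ4 ?addbK2 // !inE eqxx ?orbT.
  + by split; [apply: HTn|apply: HTn|apply: HRn|apply: HRn]; rewrite ?inE ?eqxx ?orbT.
  move=> e; rewrite B0list_S B0e HnB0 /= !count_cat /= !in_setU HQe U_S.
  have Hpc := (permP Hperm) (fun F : {set E} => e \in F); rewrite /= in Hpc.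
  case He: (e \in parts k.+1).
    rewrite (negbTE (U_new Hk He)) /=.
    have := Hcnt e He; rewrite count_cat /= => Hc6; gen_nat; clear -Hpc Hc6; lia.
  have := count_sub0 Hsub (negbT He); rewrite count_cat /= => Hz.
  have sQ1 : Q1 \subset parts k.+1 by apply: (proj2 (Hloc Q1 _)); rewrite !inE eqxx.
  have sQ2 : Q2 \subset parts k.+1 by apply: (proj2 (Hloc Q2 _)); rewrite !inE eqxx ?orbT.
  have sQ3 : Q3 \subset parts k.+1 by apply: (proj2 (Hloc Q3 _)); rewrite !inE eqxx ?orbT.
  have sQ4 : Q4 \subset parts k.+1 by apply: (proj2 (Hloc Q4 _)); rewrite !inE eqxx ?orbT.
  have sl1 : l1 \subset parts k.+1 by apply: Hsub; rewrite !inE eqxx ?orbT.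
  have sl2 : l2 \subset parts k.+1 by apply: Hsub; rewrite !inE eqxx ?orbT.
  have sr1 : r1 \subset parts k.+1 by apply: Hsub; rewrite !inE eqxx ?orbT.
  have sr2 : r2 \subset parts k.+1 by apply: Hsub; rewrite !inE eqxx ?orbT.
  falsify_loc He; rewrite !orbF; case: (U k e); rewrite /=; gen_nat; clear -Hz Hpc; lia.
Qed.


Lemma StB_step k : k < n -> StB k -> StB k.+1.
Proof.
move=> Hk [c Hc].
case: (classify Hk) => [[Hx HB0 [l [Hl Hl1 Hl2 Hln]]] | [HnB Hxx [f [Hf Hj]]] | HB2].
- exists c => s1 s2 s3 s4.
  have HnB2 : isB2 xs parts k.+1 = false by rewrite /isB2 /= Hx eqxx.
  have HB02 : isB02 xs parts k.+1 by rewrite /isB02 HB0.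
  rewrite cB2_S HnB2 addn0 => Hadm.
  have [F0 [P1 [P2 [P3 [P4 [T1 [T2 [R1 [R2 [HF0 [HP1 HP2 HP3 HP4] [HT1 HT2 HR1 HR2] Hfc]]]]]]]]]]
    := Hc _ _ _ _ Hadm.
  have HU_old : forall X, X \in [:: P1; P2; P3; P4; T1; T2; R1; R2] -> forall e, e \in X -> U k e.
    by move=> X HX e; apply: fc_U Hfc _; rewrite !mem_cat HX !orbT.
  have [Hlc Hlv] := loop_circ Hl1 Hl2 Hln.
  have HLs : set0 :|: [set l] \subset parts k.+1 by rewrite Hl set0U.
  have HI : [set xs k] :&: vset [set l] = [set xs k] by rewrite Hlv setIid.
  have HI' : [set xs k.+1] :&: vset [set l] = [set xs k.+1] by rewrite Hlv Hx setIid.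
  have HRT := RT_new Hk HB02 Hlc (path_nil e1 e2 (xs k.+1)) HI' HLs.
  have B1 := bar_new Hk HR1 (HU_old R1 ltac:(by rewrite !inE eqxx ?orbT))
    (path_nil e1 e2 (xs k)) HI Hlc HLs.
  have B2 := bar_new Hk HR2 (HU_old R2 ltac:(by rewrite !inE eqxx ?orbT))
    (path_nil e1 e2 (xs k)) HI Hlc HLs.
  exists (F0 ++ [:: R1 :|: (set0 :|: [set l]); R2 :|: (set0 :|: [set l])]), P1, P2, P3, P4,
    T1, T2, (set0 :|: [set l]), (set0 :|: [set l]); split.
  + by move=> F; rewrite mem_cat => /orP[/HF0 //|]; rewrite !inE => /orP[]/eqP->.
  + by split; apply: PT_B0.
  + by split.
  move=> e; have := Hfc e; rewrite B0list_S HB0 !count_cat /= !in_setU in_set0 /= U_S Hl in_set1.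
  case El: (e == l).
    move/eqP: El => El; subst e.
    rewrite (negbTE (U_new Hk (_ : l \in parts k.+1))) ?Hl ?set11 // !orbT /= => Hold.
    gen_nat; clear -Hold; lia.
  rewrite !orbF /=; case: (U k e) => Hold; gen_nat; clear -Hold; lia.
- exists (c (+) neg f) => s1 s2 s3 s4.
  have HnB2 : isB2 xs parts k.+1 = false by move: HnB; rewrite /isB02 negb_or => /andP[_ /negbTE].
  have HnB0 : isB0 xs k.+1 = false by move: HnB; rewrite /isB02 negb_or => /andP[/negbTE].
  rewrite cB2_S HnB2 addn0 => /adm_flip Hadm.
  have [F0 [P1 [P2 [P3 [P4 [T1 [T2 [R1 [R2 [HF0 [HP1 HP2 HP3 HP4] [HT1 HT2 HR1 HR2] Hfc]]]]]]]]]]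
    := Hc _ _ _ _ Hadm.
  have HU_old : forall X, X \in [:: P1; P2; P3; P4; T1; T2; R1; R2] -> forall e, e \in X -> U k e.
    by move=> X HX e; apply: fc_U Hfc _; rewrite !mem_cat HX !orbT.
  have Hfs : [set f] \subset parts k.+1 by rewrite Hf.
  have Hpf := path_edge Hj Hxx.
  have HPn : forall X s, X \in [:: P1; P2; P3; P4] -> PT k (s (+) neg f) X ->
      PT k.+1 s (X :|: [set f]).
    move=> X s HX HPX; have := PT_ext Hk HPX (HU_old X _) Hpf Hfs.
    rewrite sgn1 addbK; apply; move: HX; rewrite !inE => /or4P[]->; by rewrite ?orbT.
  have HRn : forall X, X \in [:: R1; R2] -> RT k X -> RT k.+1 (X :|: [set f]).
    move=> X HX HRX; apply: RT_ext Hk HRX (HU_old X _) Hpf Hfs HnB.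
    by move: HX; rewrite !inE => /orP[]->; rewrite ?orbT.
  exists F0, (P1 :|: [set f]), (P2 :|: [set f]), (P3 :|: [set f]), (P4 :|: [set f]),
    T1, T2, (R1 :|: [set f]), (R2 :|: [set f]); split => //.
  + by split; apply: HPn; rewrite // !inE eqxx ?orbT.
  + by split => //; apply: HRn; rewrite // !inE eqxx ?orbT.
  move=> e; have := Hfc e; rewrite B0list_S HnB0 cats0 !count_cat /= !in_setU U_S Hf in_set1.
  case Ef: (e == f).
    move/eqP: Ef => Ef; subst e.
    rewrite (negbTE (U_new Hk (_ : f \in parts k.+1))) ?Hf ?set11 // !orbT /= => Hold.
    gen_nat; clear -Hold; lia.
  rewrite !orbF /=; case: (U k e) => Hold; gen_nat; clear -Hold; lia.
- exists c => s1 s2 s3 s4.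
  have HB02 : isB02 xs parts k.+1 by rewrite /isB02 HB2 orbT.
  have HnB0 : isB0 xs k.+1 = false by move: HB2; rewrite /isB2 /isB0 => /andP[/negbTE].
  rewrite cB2_S HB2 addn1 => /adm_B2 [p1 [p2 [p3 [p4 /andP[Hw Hadm]]]]].
  have [F0 [P1 [P2 [P3 [P4 [T1 [T2 [R1 [R2 [HF0 [HP1 HP2 HP3 HP4] [HT1 HT2 HR1 HR2] Hfc]]]]]]]]]]
    := Hc _ _ _ _ Hadm.
  have HU_old : forall X, X \in [:: P1; P2; P3; P4; T1; T2; R1; R2] -> forall e, e \in X -> U k e.
    by move=> X HX e; apply: fc_U Hfc _; rewrite !mem_cat HX !orbT.
  have [a [b [c' [d [l1 [l2 [r1 [r2 [Cs [[Ha Hb Hc' Hd] [Hl1 Hl2 Hr1 Hr2] HCs Hsub Hcnt]]]]]]]]]]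
    := psi_dest (Hpsi (i := k.+1) ltac:(by rewrite /= Hk) HB2).
  have [Q1 [Q2 [Q3 [Q4 [[HQ1 HQ2 HQ3 HQ4] Hperm]]]]] :=
    pattern (proj2 Ha) (proj2 Hb) (proj2 Hc') (proj2 Hd) Hw.
  have Hloc : forall X, X \in [:: Q1; Q2; Q3; Q4] ->
      (exists W, xypath (xs k) (xs k.+1) W X) /\ X \subset parts k.+1.
    move=> X; rewrite (perm_mem Hperm) => HX; split.
      2: by apply: Hsub; rewrite mem_cat; move: HX; rewrite !inE => /or4P[]->; rewrite ?orbT.
    by move: HX; rewrite !inE => /or4P[]/eqP->; [case: Ha|case: Hb|case: Hc'|case: Hd].
  have HPn : forall X Y s p, X \in [:: P1; P2; P3; P4] -> Y \in [:: Q1; Q2; Q3; Q4] ->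
      PT k (s (+) p) X -> sgn neg Y = p -> PT k.+1 s (X :|: Y).
    move=> X Y s p HX HY HPX HYs; have [[W' HW'] HYs'] := Hloc Y HY.
    have := PT_ext Hk HPX (HU_old X _) HW' HYs'.
    rewrite HYs addbK; apply; move: HX; rewrite !inE => /or4P[]->; by rewrite ?orbT.
  have HBn : forall X Y, X \in [:: R1; R2] -> Y \in [:: l1; l2] -> RT k X ->
      (exists C, tadpole e1 e2 neg (xs k) Y C) -> signed_circuit e1 e2 neg (X :|: Y).
    move=> X Y HX HY HRX [C [HC [y [Wl [Pl [HPl HIl HYe]]]]]].
    have HYs : Y \subset parts k.+1 by apply: Hsub; move: HY; rewrite !inE => /orP[]/eqP->;
      rewrite eqxx ?orbT.
    rewrite HYe; apply: bar_new Hk HRX (HU_old X _) HPl HIl HC _; last by rewrite -HYe.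
    by move: HX; rewrite !inE => /orP[]->; rewrite ?orbT.
  have HRn : forall X, X \in [:: r1; r2] -> (exists C, tadpole e1 e2 neg (xs k.+1) X C) ->
      RT k.+1 X.
    move=> X HX [C [HC [y [Wr [Pr [HPr HIr HXe]]]]]].
    have HXs : X \subset parts k.+1 by apply: Hsub; move: HX; rewrite !inE => /orP[]/eqP->;
      rewrite eqxx ?orbT.
    rewrite HXe; apply: RT_new Hk HB02 HC (path_rev HPr) HIr _; by rewrite -HXe.
  exists (F0 ++ Cs ++ [:: R1 :|: l1; R2 :|: l2]), (P1 :|: Q1), (P2 :|: Q2), (P3 :|: Q3),
    (P4 :|: Q4), T1, T2, r1, r2; split.
  + move=> F; rewrite !mem_cat => /or3P[/HF0 //|/HCs //|]; rewrite !inE => /orP[]/eqP->.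
      by apply: HBn; rewrite // !inE eqxx ?orbT.
    by apply: HBn; rewrite // !inE eqxx ?orbT.
  + split; [apply: (HPn _ _ _ p1) | apply: (HPn _ _ _ p2) | apply: (HPn _ _ _ p3) |
            apply: (HPn _ _ _ p4)]; by rewrite // !inE eqxx ?orbT.
  + by split => //; apply: HRn; rewrite // !inE eqxx ?orbT.
  move=> e; have := Hfc e; rewrite B0list_S HnB0 cats0 !count_cat /= !in_setU U_S.
  have Hpc := (permP Hperm) (fun F : {set E} => e \in F); rewrite /= in Hpc.
  case He: (e \in parts k.+1).
    have HUk := negbTE (U_new Hk He); rewrite HUk /= => Hold.
    have F := fun X HX => negbTE (contra (HU_old X HX e) (negbT HUk)).
    rewrite (F P1 ltac:(by rewrite !inE eqxx /= ?orbT)) (F P2 ltac:(by rewrite !inE eqxx /= ?orbT))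
      (F P3 ltac:(by rewrite !inE eqxx /= ?orbT)) (F P4 ltac:(by rewrite !inE eqxx /= ?orbT))
      (F T1 ltac:(by rewrite !inE eqxx /= ?orbT)) (F T2 ltac:(by rewrite !inE eqxx /= ?orbT))
      (F R1 ltac:(by rewrite !inE eqxx /= ?orbT)) (F R2 ltac:(by rewrite !inE eqxx /= ?orbT)) /=.
    have := Hcnt e He; rewrite count_cat /= => Hc6; move: Hpc Hc6 Hold; finish_lia.
  have := count_sub0 Hsub (negbT He); rewrite count_cat /= => Hz.
  have sQ1 : Q1 \subset parts k.+1 by apply: (proj2 (Hloc Q1 _)); rewrite !inE eqxx.
  have sQ2 : Q2 \subset parts k.+1 by apply: (proj2 (Hloc Q2 _)); rewrite !inE eqxx ?orbT.
  have sQ3 : Q3 \subset parts k.+1 by apply: (proj2 (Hloc Q3 _)); rewrite !inE eqxx ?orbT.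
  have sQ4 : Q4 \subset parts k.+1 by apply: (proj2 (Hloc Q4 _)); rewrite !inE eqxx ?orbT.
  have sl1 : l1 \subset parts k.+1 by apply: Hsub; rewrite !inE eqxx ?orbT.
  have sl2 : l2 \subset parts k.+1 by apply: Hsub; rewrite !inE eqxx ?orbT.
  have sr1 : r1 \subset parts k.+1 by apply: Hsub; rewrite !inE eqxx ?orbT.
  have sr2 : r2 \subset parts k.+1 by apply: Hsub; rewrite !inE eqxx ?orbT.
  have G := fun X (HX : X \subset parts k.+1) => negbTE (contra (subsetP HX e) (negbT He)).
  rewrite (G Q1 sQ1) (G Q2 sQ2) (G Q3 sQ3) (G Q4 sQ4) (G l1 sl1) (G l2 sl2) (G r1 sr1) (G r2 sr2).
  rewrite !orbF; case: (U k e) => /= Hold; move: Hz Hpc Hold; finish_lia.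
Qed.


Lemma StA0 : StA 0.
Proof.
split; first by move=> j /andP[H1 H2]; move: (leq_trans H1 H2).
exists [set xs 0], set0; split.
- exact: path_nil.
- by move=> v /set1P ->; rewrite /VU eqxx.
- by move=> e; rewrite inE.
Qed.

Lemma inv_all k : k <= n -> StA k \/ StB k.
Proof.
elim: k => [|k IH] Hk; first by left; exact: StA0.
case: (IH (ltnW Hk)) => [HA|HB].
  exact: StA_step Hk HA.
by right; exact: StB_step Hk HB.
Qed.

End Main.

Theorem mainTheorem2 (V E : finType) (e1 e2 : E -> V) (neg : E -> bool)
  (n : nat) (xs : nat -> V) (parts : nat -> {set E})
  (Hdec : series_decomp e1 e2 neg n xs parts)
  (Hmax : forall (m : nat) (xs' : nat -> V) (ps' : nat -> {set E}),
      series_decomp e1 e2 neg m xs' ps' -> xs' 0 = xs 0 -> xs' m = xs n ->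
      m <= n)
  (HB2 : 1 <= count (isB2 xs parts) (iota 1 n))
  (theta : bool)
  (Htheta : count (isB2 xs parts) (iota 1 n) = 1 -> theta = false)
  (Hpsi : forall i, 0 < i <= n -> isB2 xs parts i ->
      has_psi_cover e1 e2 neg (parts i) (xs i.-1) (xs i) 2) :
  exists (F0 : seq {set E}) (P1 P2 P3 P4 T1 T2 T3 T4 : {set E}),
    (forall F, F \in F0 -> signed_circuit e1 e2 neg F) /\
    [/\ 
        forall P, P \in [:: P1; P2; P3; P4] ->
          exists W, xypath e1 e2 (xs 0) (xs n) W P,
        [/\ sgn neg P1 = theta, sgn neg P2 = theta, sgn neg P3 & sgn neg P4],
        forall T, T \in [:: T1; T2] ->
          exists i C, [/\ first_B02 xs parts n i,
                          tadpole e1 e2 neg (xs 0) T C & C \subset parts i],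
        forall T, T \in [:: T3; T4] ->
          exists i C, [/\ last_B02 xs parts n i,
                          tadpole e1 e2 neg (xs n) T C & C \subset parts i]
      & forall e : E,
          count (fun F : {set E} => e \in F)
            (F0 ++ B0list xs parts n ++ B0list xs parts n
                ++ [:: P1; P2; P3; P4; T1; T2; T3; T4]) = 6].
Proof.
case: (inv_all Hdec Hpsi (leqnn n)) => [[HnoB _]|[c Hc]].
  exfalso; move: HB2; rewrite -has_count => /hasP[j]; rewrite mem_iota1 => Hj Hj2.
  by move: (HnoB j Hj); rewrite /isB02 Hj2 orbT.
have Hadm := adm_final c HB2 Htheta.
have [F0 [P1 [P2 [P3 [P4 [T1 [T2 [R1 [R2 [HF0 [HP1 HP2 HP3 HP4] [HT1 HT2 HR1 HR2] Hfc]]]]]]]]]]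
  := Hc _ _ _ _ Hadm.
have HRT : forall R, RT e1 e2 neg xs parts n R -> exists i C, [/\ last_B02 xs parts n i,
              tadpole e1 e2 neg (xs n) R C & C \subset parts i].
  move=> R [i [[Hi HiB Hj] [y [W [P [C [[HC HCs HP HI HR] _]]]]]]].
  exists i, C; split => //; split => //.
  by exists y, W, P; split => //; apply: path_rev.
exists F0, P1, P2, P3, P4, T1, T2, R1, R2; split => //; split.
- move=> P; rewrite !inE => /or4P[]/eqP->;
    [case: HP1 => [[W [HW _]] _] | case: HP2 => [[W [HW _]] _] | case: HP3 => [[W [HW _]] _]
    | case: HP4 => [[W [HW _]] _]]; by exists W.
- by split; [case: HP1|case: HP2|case: HP3|case: HP4].
- by move=> T; rewrite !inE => /orP[]/eqP->.
- by move=> T; rewrite !inE => /orP[]/eqP->; apply: HRT.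
move=> e; rewrite Hfc; have [i Hi He] := Hcov Hdec e.
have -> : U parts n e by apply/hasP; exists i => //; rewrite mem_iota1.
done.
Qed.
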